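(* Let $s,t\in\mathbb{N}$ and $\varepsilon,k,m>0$. The following are equivalent, where each group is considered with the generating set $\{a,b\}$ of its standard presentation: (1) $BS(s,t)$ is $\varepsilon$-densely $(k,m)$-chordal; (2) $BS(-s,t)$ is; (3) $BS(s,-t)$ is; (4) $BS(-s,-t)$ is; (5) $BS(t,s)$ is; (6) $BS(-t,s)$ is; (7) $BS(t,-s)$ is; (8) $BS(-t,-s)$ is.
   Context: For integers $p,q$, $BS(p,q)=\langle a,b\mid ba^pb^{-1}=a^q\rangle$. A group is called $\varepsilon$-densely $(k,m)$-chordal if its Cayley graph with respect to $\{a,b\}$ (vertices the group elements, edges $\{g,gs\}$ for $s\in\{a^{\pm1},b^{\pm1}\}$, each edge of length 1) is. A cycle is a simple closed path (length at least 3); $L$ denotes length and $d_\gamma$ the length metric on the cycle $\gamma$. A shortcut in $\gamma$ is a path $\sigma$ joining vertices $p,q$ of $\gamma$ with $L(\sigma)<d_\gamma(p,q)$; it is strict if $\sigma\cap\gamma=\{p,q\}$, and $p,q$ are its associated shortcut vertices. A graph is $\varepsilon$-densely $(k,m)$-chordal if for every cycle $\gamma$ with $L(\gamma)\ge k$ there are strict shortcuts $\sigma_1,\dots,\sigma_r$ with $L(\sigma_i)\le m$ whose associated shortcut vertices form an $\varepsilon$-dense subset of $(\gamma,d_\gamma)$. *)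

(* Defs.v *)
From Stdlib Require Import Reals Lra ZArith List Relations.
Import ListNotations.
Open Scope R_scope.

Fixpoint chain {V : Type} (adj : V -> V -> Prop) (x : V) (l : list V) : Prop :=
  match l with
  | nil => True
  | y :: l' => adj x y /\ chain adj y l'
  end.

(* A cycle: a simple closed path, given by its cyclic vertex list
   [v_0; ...; v_{n-1}], n >= 3, pairwise distinct, v_i ~ v_{i+1}, v_{n-1} ~ v_0.
   Each edge has length 1, so L(c) = n = length c. *)
Definition is_cycle {V : Type} (adj : V -> V -> Prop) (c : list V) : Prop :=
  (3 <= length c)%nat /\ NoDup c /\
  match c with
  | nil => False
  | x :: rest => chain adj x rest /\ adj (last rest x) x
  end.

(* Length metric on a cycle of length n, points parametrized by arc length
   in [0, n); the vertex v_i sits at position i. *)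
Definition dcyc (n : nat) (x y : R) : R :=
  Rmin (Rabs (x - y)) (INR n - Rabs (x - y)).

(* A strict shortcut in the cycle c, given by the indices i, j of its
   endpoints p = c_i, q = c_j and the list l of its interior vertices,
   i.e. sigma = p :: l ++ [q], of length L(sigma) = length l + 1. *)
Definition strict_shortcut {V : Type} (adj : V -> V -> Prop) (c : list V)
    (i j : nat) (l : list V) : Prop :=
  exists d : V,
  (i < length c)%nat /\ (j < length c)%nat /\
  chain adj (nth i c d) (l ++ [nth j c d]) /\
  INR (length l + 1) < dcyc (length c) (INR i) (INR j) /\
  (forall v, In v l -> ~ In v c).

Definition dense_chordal {V : Type} (adj : V -> V -> Prop) (eps k m : R) : Prop :=
  forall c : list V, is_cycle adj c -> k <= INR (length c) ->
  exists sc : list (nat * nat * list V),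
    (forall i j l, In (i, j, l) sc ->
        strict_shortcut adj c i j l /\ INR (length l + 1) <= m) /\
    (forall x : R, 0 <= x < INR (length c) ->
       exists i j l, In (i, j, l) sc /\
         (dcyc (length c) x (INR i) <= eps \/ dcyc (length c) x (INR j) <= eps)).

Inductive gen := ga | gA | gb | gB.   (* a, a^-1, b, b^-1 *)

Definition ginv (x : gen) : gen :=
  match x with ga => gA | gA => ga | gb => gB | gB => gb end.

Definition word := list gen.

Definition apow (z : Z) : word :=
  if (0 <=? z)%Z then repeat ga (Z.to_nat z) else repeat gA (Z.to_nat (- z)).

(* relator of BS(p,q) = < a, b | b a^p b^-1 = a^q > : b a^p b^-1 a^-q *)
Definition bs_rel (p q : Z) : word := [gb] ++ apow p ++ [gB] ++ apow (- q).

Inductive wstep (r : word) : word -> word -> Prop :=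
| ws_free (u v : word) (x : gen) : wstep r (u ++ x :: ginv x :: v) (u ++ v)
| ws_rel (u v : word) : wstep r (u ++ r ++ v) (u ++ v).

Definition weq (r : word) : word -> word -> Prop :=
  clos_refl_sym_trans word (wstep r).

Definition BS (p q : Z) : Type :=
  { S : word -> Prop | exists w : word, S = weq (bs_rel p q) w }.

Definition cls (p q : Z) (w : word) : BS p q :=
  exist _ (weq (bs_rel p q) w) (ex_intro _ w eq_refl).

(* Cayley graph w.r.t. {a,b}: edges {g, g s}, s in {a^±1, b^±1} (simple graph) *)
Definition cayley_adj (p q : Z) (g h : BS p q) : Prop :=
  g <> h /\ exists (w : word) (s : gen), g = cls p q w /\ h = cls p q (w ++ [s]).

Definition BS_dense_chordal (p q : Z) (eps k m : R) : Prop :=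
  dense_chordal (cayley_adj p q) eps k m.

(* Main.v *)
Require Import Defs.
From Stdlib Require Import Reals ZArith.
From Stdlib Require Import List Relations Lia Bool FunctionalExtensionality
  PropExtensionality ProofIrrelevance ClassicalEpsilon FinFun.
Import ListNotations.
Open Scope R_scope.

Lemma chain_map {V1 V2 : Type} (a1 : V1 -> V1 -> Prop) (a2 : V2 -> V2 -> Prop)
  (f : V1 -> V2) (Hf : forall x y, a1 x y -> a2 (f x) (f y)) x l :
  chain a1 x l -> chain a2 (f x) (map f l).
Proof. revert x; induction l; simpl; intuition. Qed.

Lemma last_map' {A B : Type} (f : A -> B) (l : list A) x :
  last (map f l) (f x) = f (last l x).
Proof.
  revert x; induction l as [|y l IH]; intros x; simpl; auto.
  destruct l; simpl; auto. exact (IH x).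
Qed.

Lemma dc_transfer {V1 V2 : Type} (a1 : V1 -> V1 -> Prop) (a2 : V2 -> V2 -> Prop)
  (f : V1 -> V2) (g : V2 -> V1) eps k m
  (fg : forall x, f (g x) = x) (gf : forall x, g (f x) = x)
  (Hf : forall x y, a1 x y -> a2 (f x) (f y)) (Hg : forall x y, a2 x y -> a1 (g x) (g y)) :
  dense_chordal a1 eps k m -> dense_chordal a2 eps k m.
Proof.
  intros D c Hc Hk.
  assert (Hc1 : is_cycle a1 (map g c)).
  { destruct Hc as [Hl [Hnd Hch]]. split; [rewrite length_map; auto|split].
    - apply Injective_map_NoDup; auto. intros x y E.
      rewrite <- (fg x), <- (fg y), E; reflexivity.
    - destruct c as [|x rest]; [contradiction|]. simpl. destruct Hch as [H1 H2].
      split. apply (chain_map a2 a1 g Hg); auto. rewrite last_map'. auto. }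
  destruct (D _ Hc1) as [sc1 [S1 S2]]. { rewrite length_map; auto. }
  rewrite length_map in S2.
  exists (map (fun t => match t with (i,j,l) => (i,j,map f l) end) sc1). split.
  - intros i j l Hin. apply in_map_iff in Hin.
    destruct Hin as [[[i1 j1] l1] [E Hin]]. injection E as <- <- <-.
    destruct (S1 _ _ _ Hin) as [[d [Hi [Hj [Hch [Hlen Hdis]]]]] Hm].
    rewrite length_map in *. split.
    + exists (f d). split; [auto|split;[auto|split;[|split]]].
      * rewrite <- (gf d) in Hch. rewrite !map_nth in Hch.
        apply (chain_map _ _ f Hf) in Hch. rewrite map_app in Hch. simpl in Hch.
        rewrite !fg in Hch. exact Hch.
      * rewrite ?length_map. exact Hlen.
      * intros v Hv Hvc. apply in_map_iff in Hv. destruct Hv as [v1 [<- Hv1]].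
        apply (Hdis v1 Hv1). rewrite <- (gf v1). apply in_map; auto.
    + rewrite ?length_map; auto.
  - intros x Hx. destruct (S2 x Hx) as [i [j [l [Hin Hd]]]].
    exists i, j, (map f l). split; auto.
    apply in_map_iff. exists (i,j,l); auto.
Qed.

Definition inv (w : word) : word := rev (map ginv w).

Lemma ginv_inv x : ginv (ginv x) = x.
Proof. destruct x; reflexivity. Qed.

Lemma step_ctx r a b u v : wstep r u v -> wstep r (a ++ u ++ b) (a ++ v ++ b).
Proof.
  intros [u' v' x|u' v'].
  - replace (a ++ (u' ++ x :: ginv x :: v') ++ b) with ((a ++ u') ++ x :: ginv x :: (v' ++ b))
      by (rewrite <- !app_assoc; reflexivity).
    replace (a ++ (u' ++ v') ++ b) with ((a ++ u') ++ (v' ++ b))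
      by (rewrite <- !app_assoc; reflexivity). constructor.
  - replace (a ++ (u' ++ r ++ v') ++ b) with ((a ++ u') ++ r ++ (v' ++ b))
      by (rewrite <- !app_assoc; reflexivity).
    replace (a ++ (u' ++ v') ++ b) with ((a ++ u') ++ (v' ++ b))
      by (rewrite <- !app_assoc; reflexivity). constructor.
Qed.

Lemma weq_ctx r a b u v : weq r u v -> weq r (a ++ u ++ b) (a ++ v ++ b).
Proof.
  induction 1.
  - apply rst_step, step_ctx; auto.
  - apply rst_refl.
  - apply rst_sym; auto.
  - eapply rst_trans; eauto.
Qed.

Lemma weq_app r u u' v v' : weq r u u' -> weq r v v' -> weq r (u ++ v) (u' ++ v').
Proof.
  intros H1 H2. apply rst_trans with (u' ++ v).
  - apply (weq_ctx r [] v u u' H1).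
  - pose proof (weq_ctx r u' [] v v' H2) as H. rewrite !app_nil_r in H. exact H.
Qed.

Lemma inv_cancel r u : weq r (inv u ++ u) [].
Proof.
  induction u as [|x u IH]; simpl. apply rst_refl.
  eapply rst_trans; [|exact IH]. apply rst_step. unfold inv. simpl.
  replace ((rev (map ginv u) ++ [ginv x]) ++ x :: u)
    with (rev (map ginv u) ++ ginv x :: ginv (ginv x) :: u).
  constructor. rewrite ginv_inv, <- app_assoc. reflexivity.
Qed.

Lemma inv_inv u : inv (inv u) = u.
Proof.
  unfold inv. rewrite map_rev, rev_involutive, map_map.
  rewrite (map_ext _ (fun x => x)). apply map_id. apply ginv_inv.
Qed.

Lemma inv_app u v : inv (u ++ v) = inv v ++ inv u.
Proof. unfold inv. rewrite map_app, rev_app_distr. reflexivity. Qed.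

Lemma cancel_inv r u : weq r (u ++ inv u) [].
Proof. pose proof (inv_cancel r (inv u)) as H. rewrite inv_inv in H. exact H. Qed.

Lemma triv_inv r x : weq r x [] -> weq r (inv x) [].
Proof.
  intros H. apply rst_trans with (inv x ++ x); [|apply inv_cancel].
  pose proof (weq_app r (inv x) (inv x) [] x (rst_refl _ _ _) (rst_sym _ _ _ _ H)) as H'.
  rewrite app_nil_r in H'. exact H'.
Qed.

Lemma triv_rot r x y : weq r (x ++ y) [] -> weq r (y ++ x) [].
Proof.
  intros H. apply rst_trans with (y ++ (x ++ y) ++ inv y).
  - replace (y ++ (x ++ y) ++ inv y) with ((y ++ x) ++ (y ++ inv y))
      by (rewrite <- !app_assoc; reflexivity).
    assert (H' : weq r ((y ++ x) ++ []) ((y ++ x) ++ (y ++ inv y))).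
    { apply weq_app; [apply rst_refl| apply rst_sym, cancel_inv]. }
    rewrite app_nil_r in H'. exact H'.
  - apply rst_trans with (y ++ [] ++ inv y). apply weq_ctx; auto.
    simpl. apply cancel_inv.
Qed.

Lemma inv_repeat x n : inv (repeat x n) = repeat (ginv x) n.
Proof. unfold inv. rewrite map_repeat, rev_repeat. reflexivity. Qed.

Lemma apow_inv z : inv (apow z) = apow (-z).
Proof.
  unfold apow. destruct (Z.leb_spec 0 z), (Z.leb_spec 0 (-z)).
  - assert (z = 0%Z) by lia. subst. reflexivity.
  - rewrite inv_repeat, Z.opp_involutive. reflexivity.
  - rewrite inv_repeat. reflexivity.
  - lia.
Qed.

Lemma K_rot r x y : weq r (gb :: apow x ++ gB :: apow y) [] ->
  weq r (gB :: apow y ++ gb :: apow x) [].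
Proof. intros H. apply (triv_rot r (gb :: apow x) (gB :: apow y)). exact H. Qed.

Lemma K_inv r x y : weq r (gb :: apow x ++ gB :: apow y) [] ->
  weq r (gb :: apow (-x) ++ gB :: apow (-y)) [].
Proof.
  intros H. apply triv_inv in H.
  change (gb :: apow x ++ gB :: apow y) with ([gb] ++ apow x ++ [gB] ++ apow y) in H.
  rewrite !inv_app, !apow_inv in H.
  replace (inv [gB]) with [gb] in H by reflexivity.
  replace (inv [gb]) with [gB] in H by reflexivity.
  rewrite <- !app_assoc in H.
  apply (triv_rot r (apow (-y))) in H.
  rewrite <- !app_assoc in H. exact H.
Qed.

Definition out (sw st : bool) (x : gen) : gen :=
  match x with
  | ga => if st then gA else ga
  | gA => if st then ga else gA
  | gb => if sw then gB else gb
  | gB => if sw then gb else gB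
  end.

Definition nxt (tw st : bool) (x : gen) : bool :=
  match x with gb | gB => xorb tw st | _ => st end.

Fixpoint tr (sw tw st : bool) (w : word) : word :=
  match w with [] => [] | x :: w' => out sw st x :: tr sw tw (nxt tw st x) w' end.

Fixpoint fin (tw st : bool) (w : word) : bool :=
  match w with [] => st | x :: w' => fin tw (nxt tw st x) w' end.

Lemma tr_app sw tw st u v : tr sw tw st (u ++ v) = tr sw tw st u ++ tr sw tw (fin tw st u) v.
Proof. revert st; induction u; intros st; simpl; [reflexivity|]. rewrite IHu. reflexivity. Qed.

Lemma fin_app tw st u v : fin tw st (u ++ v) = fin tw (fin tw st u) v.
Proof. revert st; induction u; intros st; simpl; auto. Qed.

Lemma nxt_out sw tw st x : nxt tw st (out sw st x) = nxt tw st x.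
Proof. destruct x, sw, st; reflexivity. Qed.

Lemma tr_invol sw tw st w : tr sw tw st (tr sw tw st w) = w.
Proof.
  revert st; induction w as [|x w IH]; intros st; simpl; auto.
  rewrite nxt_out, IH. f_equal. destruct x, sw, st; reflexivity.
Qed.

Lemma tr_repeat sw tw st x n : nxt tw st x = st ->
  tr sw tw st (repeat x n) = repeat (out sw st x) n /\ fin tw st (repeat x n) = st.
Proof.
  intros H; induction n; simpl; auto. rewrite H. destruct IHn as [-> ->]. auto.
Qed.

Lemma tr_apow sw tw st z :
  tr sw tw st (apow z) = apow (if st then (-z)%Z else z) /\ fin tw st (apow z) = st.
Proof.
  unfold apow. destruct st.
  - destruct (Z.leb_spec 0 z), (Z.leb_spec 0 (-z)).
    + assert (z = 0%Z) by lia. subst. simpl. auto.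
    + destruct (tr_repeat sw tw true ga (Z.to_nat z) eq_refl) as [-> ->].
      rewrite Z.opp_involutive. auto.
    + destruct (tr_repeat sw tw true gA (Z.to_nat (-z)) eq_refl) as [-> ->]. auto.
    + lia.
  - destruct (0 <=? z)%Z.
    + destruct (tr_repeat sw tw false ga (Z.to_nat z) eq_refl) as [-> ->]. auto.
    + destruct (tr_repeat sw tw false gA (Z.to_nat (-z)) eq_refl) as [-> ->]. auto.
Qed.

Lemma tr_rel sw tw st p q :
  tr sw tw st (bs_rel p q) =
    out sw st gb :: apow (if xorb tw st then (-p)%Z else p) ++
    out sw st gB :: apow (if st then q else (-q)%Z)
  /\ fin tw st (bs_rel p q) = st.
Proof.
  unfold bs_rel. simpl. rewrite tr_app, fin_app.
  destruct (tr_apow sw tw (xorb tw st) p) as [-> ->]. simpl.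
  replace (xorb tw (xorb tw st)) with st by (destruct tw, st; reflexivity).
  destruct (tr_apow sw tw st (-q)) as [-> ->].
  split; [|reflexivity].
  destruct st, sw, tw; simpl; rewrite ?Z.opp_involutive; reflexivity.
Qed.

Lemma tr_step sw tw p q p' q'
  (H : forall st, weq (bs_rel p' q') (tr sw tw st (bs_rel p q)) []) st u v :
  wstep (bs_rel p q) u v -> weq (bs_rel p' q') (tr sw tw st u) (tr sw tw st v).
Proof.
  intros [u' v' x|u' v'].
  - rewrite !tr_app. simpl. apply rst_step.
    assert (E1 : nxt tw (nxt tw (fin tw st u') x) (ginv x) = fin tw st u')
      by (generalize (fin tw st u'); intros s; destruct x, tw, s; reflexivity).
    assert (E2 : out sw (nxt tw (fin tw st u') x) (ginv x) = ginv (out sw (fin tw st u') x))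
      by (generalize (fin tw st u'); intros s; destruct x, tw, sw, s; reflexivity).
    rewrite E1, E2. constructor.
  - rewrite !tr_app. destruct (tr_rel sw tw (fin tw st u') p q) as [_ Ef].
    rewrite ?tr_app, ?fin_app, ?Ef.
    apply weq_app; [apply rst_refl|].
    apply (weq_app _ _ [] _ _ (H _) (rst_refl _ _ _)).
Qed.

Lemma tr_weq sw tw p q p' q'
  (H : forall st, weq (bs_rel p' q') (tr sw tw st (bs_rel p q)) []) st u v :
  weq (bs_rel p q) u v -> weq (bs_rel p' q') (tr sw tw st u) (tr sw tw st v).
Proof.
  induction 1.
  - eapply tr_step; eauto.
  - apply rst_refl.
  - apply rst_sym; auto.
  - eapply rst_trans; eauto.
Qed.

Lemma cls_eq p q u v : weq (bs_rel p q) u v -> cls p q u = cls p q v.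
Proof.
  intros H. unfold cls. apply subset_eq_compat.
  extensionality x. apply propositional_extensionality. split; intros H'.
  - eapply rst_trans; [apply rst_sym; exact H|exact H'].
  - eapply rst_trans; eauto.
Qed.

Lemma cls_inj p q u v : cls p q u = cls p q v -> weq (bs_rel p q) u v.
Proof.
  intros E. apply (f_equal (@proj1_sig _ _)) in E. simpl in E.
  assert (H : weq (bs_rel p q) v v) by apply rst_refl.
  rewrite <- E in H. exact H.
Qed.

Lemma cls_surj p q (g : BS p q) : exists w, g = cls p q w.
Proof.
  destruct g as [S HS]. pose proof HS as [w Hw]. exists w.
  unfold cls. apply subset_eq_compat. exact Hw.
Qed.

Definition rep p q (g : BS p q) : word :=
  proj1_sig (constructive_indefinite_description _ (cls_surj p q g)).

Lemma rep_spec p q (g : BS p q) : g = cls p q (rep p q g).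
Proof. unfold rep. destruct constructive_indefinite_description; simpl; auto. Qed.

Definition phi sw tw p q p' q' (g : BS p q) : BS p' q' :=
  cls p' q' (tr sw tw false (rep p q g)).

Definition cond sw tw p q p' q' :=
  forall st, weq (bs_rel p' q') (tr sw tw st (bs_rel p q)) [].

Lemma phi_cls sw tw p q p' q' (H : cond sw tw p q p' q') w :
  phi sw tw p q p' q' (cls p q w) = cls p' q' (tr sw tw false w).
Proof.
  unfold phi. apply cls_eq. apply (tr_weq sw tw p q p' q' H).
  apply cls_inj. rewrite <- rep_spec. reflexivity.
Qed.

Lemma phi_inv sw tw p q p' q' (H1 : cond sw tw p q p' q') (H2 : cond sw tw p' q' p q) x :
  phi sw tw p' q' p q (phi sw tw p q p' q' x) = x.
Proof.
  destruct (cls_surj p q x) as [w ->].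
  rewrite (phi_cls _ _ _ _ _ _ H1), (phi_cls _ _ _ _ _ _ H2), tr_invol. reflexivity.
Qed.

Lemma phi_adj sw tw p q p' q' (H1 : cond sw tw p q p' q') (H2 : cond sw tw p' q' p q) x y :
  cayley_adj p q x y ->
  cayley_adj p' q' (phi sw tw p q p' q' x) (phi sw tw p q p' q' y).
Proof.
  intros [Hne [w [s [-> ->]]]]. split.
  - intros E. apply Hne. apply (f_equal (phi sw tw p' q' p q)) in E.
    rewrite !(phi_inv _ _ _ _ _ _ H1 H2) in E. exact E.
  - exists (tr sw tw false w), (out sw (fin tw false w) s).
    rewrite !(phi_cls _ _ _ _ _ _ H1), tr_app. split; reflexivity.
Qed.

Lemma BS_iso sw tw p q p' q' (H1 : cond sw tw p q p' q') (H2 : cond sw tw p' q' p q) eps k m :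
  BS_dense_chordal p q eps k m <-> BS_dense_chordal p' q' eps k m.
Proof.
  split; intros D.
  - apply (dc_transfer (cayley_adj p q) (cayley_adj p' q') (phi sw tw p q p' q') (phi sw tw p' q' p q) eps k m); auto;
      intros; apply phi_inv || apply phi_adj; auto.
  - apply (dc_transfer (cayley_adj p' q') (cayley_adj p q) (phi sw tw p' q' p q) (phi sw tw p q p' q') eps k m); auto;
      intros; apply phi_inv || apply phi_adj; auto.
Qed.

Lemma rel_triv p q : weq (bs_rel p q) (gb :: apow p ++ gB :: apow (-q)) [].
Proof.
  apply rst_step. pose proof (ws_rel (bs_rel p q) [] []) as H.
  simpl in H. rewrite app_nil_r in H. exact H.
Qed.

Lemma rel_triv' p q : weq (bs_rel p q) (gb :: apow (-p) ++ gB :: apow q) [].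
Proof.
  pose proof (K_inv _ _ _ (rel_triv p q)) as H. rewrite Z.opp_involutive in H. exact H.
Qed.

Lemma condI p q : cond false false p q (-p) (-q).
Proof.
  intros st. destruct (tr_rel false false st p q) as [-> _]. destruct st; simpl.
  - pose proof (rel_triv (-p) (-q)) as H. rewrite Z.opp_involutive in H. exact H.
  - pose proof (rel_triv' (-p) (-q)) as H. rewrite Z.opp_involutive in H. exact H.
Qed.

Lemma condS p q : cond true false p q q p.
Proof.
  intros st. destruct (tr_rel true false st p q) as [-> _]. destruct st; simpl.
  - apply K_rot. apply rel_triv.
  - apply K_rot. pose proof (rel_triv' q p) as H. exact H.
Qed.

Lemma condT p q : cond false true p q (-p) q.
Proof.
  intros st. destruct (tr_rel false true st p q) as [-> _]. destruct st; simpl.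
  - pose proof (rel_triv' (-p) q) as H. rewrite Z.opp_involutive in H. exact H.
  - apply rel_triv.
Qed.

Lemma isoI p q eps k m : BS_dense_chordal p q eps k m <-> BS_dense_chordal (-p) (-q) eps k m.
Proof.
  apply (BS_iso false false). apply condI.
  pose proof (condI (-p) (-q)) as H. rewrite !Z.opp_involutive in H. exact H.
Qed.

Lemma isoS p q eps k m : BS_dense_chordal p q eps k m <-> BS_dense_chordal q p eps k m.
Proof. apply (BS_iso true false); apply condS. Qed.

Lemma isoT p q eps k m : BS_dense_chordal p q eps k m <-> BS_dense_chordal (-p) q eps k m.
Proof.
  apply (BS_iso false true). apply condT.
  pose proof (condT (-p) q) as H. rewrite !Z.opp_involutive in H. exact H.
Qed.

Theorem proposition2 (s t : nat) (eps k m : R) :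
  0 < eps -> 0 < k -> 0 < m ->
  let S := Z.of_nat s in
  let T := Z.of_nat t in
  (BS_dense_chordal S T eps k m <-> BS_dense_chordal (- S) T eps k m) /\
  (BS_dense_chordal S T eps k m <-> BS_dense_chordal S (- T) eps k m) /\
  (BS_dense_chordal S T eps k m <-> BS_dense_chordal (- S) (- T) eps k m) /\
  (BS_dense_chordal S T eps k m <-> BS_dense_chordal T S eps k m) /\
  (BS_dense_chordal S T eps k m <-> BS_dense_chordal (- T) S eps k m) /\
  (BS_dense_chordal S T eps k m <-> BS_dense_chordal T (- S) eps k m) /\
  (BS_dense_chordal S T eps k m <-> BS_dense_chordal (- T) (- S) eps k m).
Proof.
  intros _ _ _ S T.
  pose proof (isoT S T eps k m). pose proof (isoI S T eps k m).
  pose proof (isoT S (-T) eps k m). pose proof (isoS S T eps k m).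
  pose proof (isoT T S eps k m). pose proof (isoI T S eps k m).
  pose proof (isoT T (-S) eps k m).
  tauto.
Qed.
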